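(* Let $n\ge1$ players all have the same valuation $v$ on a finite set of goods $M$. Assume $v$ has nonzero marginal utility: $v(S\cup\{g\})>v(S)$ for every $S\subsetneq M$ and $g\notin S$. Then every leximin solution is both EFX and Pareto optimal.
   Context: A valuation is a function $v:2^M\to\mathbb{R}_{\ge0}$ with $v(\emptyset)=0$ that is monotone: $v(S)\le v(T)$ whenever $S\subseteq T$. An allocation is an ordered partition $(A_1,\dots,A_n)$ of $M$; parts may be empty. It is EFX if for all players $i,j$ and every $g\in A_j$ we have $v_i(A_i)\ge v_i(A_j\setminus\{g\})$. It is Pareto optimal (PO) if there is no allocation $B$ with $v_i(B_i)\ge v_i(A_i)$ for all $i$ and $v_j(B_j)>v_j(A_j)$ for some $j$. For an allocation $A$, let $X^A$ be the ordering of the players by increasing utility $v_i(A_i)$, with ties broken by increasing player index. The leximin comparison is defined as follows. For allocations $A$ and $B$, let $\ell$ be the first index at which $v_{X^A_\ell}(A_{X^A_\ell})\ne v_{X^B_\ell}(B_{X^B_\ell})$. Then $A\prec B$ holds if and only if such an $\ell$ exists and $v_{X^A_\ell}(A_{X^A_\ell})< v_{X^B_\ell}(B_{X^B_\ell})$. Equivalently, the sorted utility vector of $A$ is lexicographically smaller than that of $B$. A leximin solution is an allocation $A$ with no allocation $B$ satisfying $A\prec B$. *)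

(* Defs.v *)
From HB Require Import structures.
From mathcomp Require Import all_boot all_order all_algebra.
Set Implicit Arguments. Unset Strict Implicit. Unset Printing Implicit Defensive.
Import Order.TTheory GRing.Theory Num.Theory.
Local Open Scope ring_scope.

Definition is_valuation (R : realFieldType) (M : finType) (v : {set M} -> R) : Prop :=
  v set0 = 0 /\ (forall S, 0 <= v S) /\ (forall S T : {set M}, S \subset T -> v S <= v T).

Definition is_allocation (M : finType) (n : nat) (A : {ffun 'I_n -> {set M}}) : Prop :=
  (forall i j : 'I_n, i != j -> [disjoint A i & A j]) /\
  (forall g : M, exists i : 'I_n, g \in A i).

Definition utilities (R : realFieldType) (M : finType) (n : nat)
  (vs : 'I_n -> {set M} -> R) (A : {ffun 'I_n -> {set M}}) : seq R :=
  [seq vs i (A i) | i <- enum 'I_n].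

Definition sorted_utilities (R : realFieldType) (M : finType) (n : nat)
  (vs : 'I_n -> {set M} -> R) (A : {ffun 'I_n -> {set M}}) : seq R :=
  sort (fun x y : R => x <= y) (utilities vs A).

Fixpoint lex_lt (R : realFieldType) (s t : seq R) : Prop :=
  match s, t with
  | x :: s', y :: t' => x < y \/ (x = y /\ lex_lt s' t')
  | _, _ => False
  end.

Definition leximin_lt (R : realFieldType) (M : finType) (n : nat)
  (vs : 'I_n -> {set M} -> R) (A B : {ffun 'I_n -> {set M}}) : Prop :=
  lex_lt (sorted_utilities vs A) (sorted_utilities vs B).

Definition is_leximin (R : realFieldType) (M : finType) (n : nat)
  (vs : 'I_n -> {set M} -> R) (A : {ffun 'I_n -> {set M}}) : Prop :=
  is_allocation A /\
  ~ (exists B, is_allocation B /\ leximin_lt vs A B).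

Definition is_EFX (R : realFieldType) (M : finType) (n : nat)
  (vs : 'I_n -> {set M} -> R) (A : {ffun 'I_n -> {set M}}) : Prop :=
  forall (i j : 'I_n) (g : M), g \in A j -> vs i (A j :\ g) <= vs i (A i).

Definition is_PO (R : realFieldType) (M : finType) (n : nat)
  (vs : 'I_n -> {set M} -> R) (A : {ffun 'I_n -> {set M}}) : Prop :=
  ~ (exists B, is_allocation B /\
       (forall i, vs i (A i) <= vs i (B i)) /\ (exists j, vs j (A j) < vs j (B j))).

(* Main.v *)
Require Import Defs.
From HB Require Import structures.
From mathcomp Require Import all_boot all_order all_algebra.
From mathcomp Require Import zify.
Import Order.TTheory GRing.Theory Num.Theory.
Local Open Scope ring_scope.

Lemma filter_ge (R : realFieldType) (s : seq R) (x : R) :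
  all (fun t => x <= t) s -> [seq t <- s | t < x] = [::].
Proof. by elim: s => //= t s IH /andP[h hs]; rewrite ltNge h /= IH. Qed.

Lemma lexN (R : realFieldType) (x : R) (a b : seq R) :
  sorted (fun x y : R => x <= y) a -> sorted (fun x y : R => x <= y) b ->
  size a = size b ->
  [seq t <- a | t < x] = [seq t <- b | t < x] ->
  (count (fun t => t == x) b < count (fun t => t == x) a)%N ->
  lex_lt a b.
Proof.
elim: a b => [|y a IH] [|z b] //= Hsa Hsb Hsz Hf Hc.
have ay := order_path_min (@le_trans _ R) Hsa.
have bz := order_path_min (@le_trans _ R) Hsb.
have sa := path_sorted Hsa; have sb := path_sorted Hsb.
case: (ltP y x) => yx; rewrite ?yx in Hf.
  case: (ltP z x) => zx; rewrite ?zx in Hf.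
    case: Hf => yz Hf; subst z; right; split => //; apply: IH => //; first by case: Hsz.
    by move: Hc; rewrite ltn_add2l.
  rewrite (ltNge z x) zx /= (@filter_ge _ b x) // in Hf.
  apply: sub_all bz => t; exact: le_trans.
rewrite (ltNge y x) yx /= in Hf.
have fa : [seq t <- a | t < x] = [::].
  by apply: filter_ge; apply: sub_all ay => t; apply: le_trans.
have yeq : y = x.
  have : has (fun t => t == x) (y :: a) by rewrite has_count /=; lia.
  case/hasP => t; rewrite inE => /orP[/eqP-> /eqP-> //| ta /eqP tx].
  apply/eqP; rewrite eq_le yx andbT -tx.
  by move/allP: ay => /(_ t ta).
case: (ltP z x) => zx.
  by rewrite zx fa in Hf.
rewrite (ltNge z x) zx /= in Hf.
case: (ltgtP z x) => zx'.
- by move: zx; rewrite leNgt zx'.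
- by left; rewrite yeq.
right; split; first by rewrite yeq zx'.
apply: IH => //; first by case: Hsz.
by move: Hc; rewrite yeq zx' eqxx.
Qed.

Lemma keyL (R : realFieldType) (I : finType) (u w : I -> R) (x : R) :
  (forall k, u k = w k \/ (x <= u k /\ x < w k)) ->
  (exists k, u k = x /\ u k != w k) ->
  lex_lt (sort (fun a b : R => a <= b) [seq u i | i <- enum I])
         (sort (fun a b : R => a <= b) [seq w i | i <- enum I]).
Proof.
move=> H [k0 [uk0 nk0]].
have tot : total (fun a b : R => a <= b) by move=> a b; exact: le_total.
have tr : transitive (fun a b : R => a <= b) by move=> a b c; exact: le_trans.
have an : antisymmetric (fun a b : R => a <= b) by move=> a b; exact: le_anti.
have ps s : perm_eq (sort (fun a b : R => a <= b) s) s by rewrite perm_sort.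
have wk0 : x < w k0.
  by case: (H k0) => [e|[]//]; rewrite e eqxx in nk0.
apply: (@lexN _ x).
- exact: sort_sorted.
- exact: sort_sorted.
- by rewrite !size_sort !size_map.
- rewrite !filter_sort //; apply/perm_sortP => //.
  suff -> : [seq t <- [seq u i | i <- enum I] | t < x] = [seq t <- [seq w i | i <- enum I] | t < x].
    exact: perm_refl.
  elim: (enum I) => //= k e IH; case: (H k) => [->|[h1 h2]]; first by rewrite IH.
  by rewrite ltNge h1 ltNge (ltW h2) /= IH.
rewrite !(permP (ps _)).
suff: forall e : seq I,
  (count (fun t => t == x) [seq w i | i <- e] <= count (fun t => t == x) [seq u i | i <- e])%N /\
  (k0 \in e -> (count (fun t => t == x) [seq w i | i <- e] < count (fun t => t == x) [seq u i | i <- e])%N).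
  by move/(_ (enum I)) => [_ ->] //; rewrite mem_enum.
have elem k : ((w k == x) <= (u k == x))%N.
  by case: (H k) => [->|[h1 h2]] //; rewrite (gt_eqF h2).
elim => //= k e [IHle IHlt]; split.
  by have := elem k; lia.
rewrite inE => /orP[/eqP <-|ke].
  by rewrite (gt_eqF wk0) uk0 eqxx /=; lia.
by have := IHlt ke; have := elem k; lia.
Qed.

Theorem theorem5p4 (R : realFieldType) (M : finType) (n : nat) (v : {set M} -> R) :
  (0 < n)%N ->
  is_valuation v ->
  (forall (S : {set M}) (g : M), S \proper [set: M] -> g \notin S -> v S < v (g |: S)) ->
  forall A : {ffun 'I_n -> {set M}},
    is_leximin (fun _ => v) A -> is_EFX (fun _ => v) A /\ is_PO (fun _ => v) A.
Proof.
move=> n0 [v0 [vge vmono]] Hmarg A [[HAd HAc] Hlex]; split.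
- move=> i j g gA /=; rewrite leNgt; apply/negP => Hlt.
  case: (eqVneq i j) => [eij|nij].
    by subst j; move: Hlt; rewrite ltNge vmono // subD1set.
  have giA : g \notin A i.
    by apply/negP => gi; rewrite (disjointFr (HAd _ _ nij) gi) in gA.
  have marg : v (A i) < v (g |: A i).
    apply: (Hmarg _ _ _ giA); rewrite properT; apply/eqP => e.
    by rewrite e inE in giA.
  pose B : {ffun 'I_n -> {set M}} :=
    [ffun k => if k == i then g |: A i else if k == j then A j :\ g else A k].
  have memB k h : (h \in B k) = (if h == g then k == i else h \in A k).
    rewrite ffunE; case: (eqVneq k i) => [->|ki].
      by rewrite in_setU1; case: (eqVneq h g).
    case: (eqVneq k j) => [->|kj].
      by rewrite in_setD1; case: (eqVneq h g).
    case: (eqVneq h g) => // ->; apply/negP => gk.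
    by rewrite (disjointFr (HAd _ _ kj) gk) in gA.
  apply: Hlex; exists B; split.
    split.
      move=> k l kl; rewrite -setI_eq0; apply/eqP/setP => h.
      rewrite !inE !memB; case: (eqVneq h g) => _.
        by apply/negP => /andP[/eqP ek /eqP el]; rewrite ek el eqxx in kl.
      apply/negP => /andP[hk hl]; by rewrite (disjointFr (HAd _ _ kl) hk) in hl.
    move=> h; case: (eqVneq h g) => [->|hg].
      by exists i; rewrite memB eqxx eqxx.
    have [k hk] := HAc h; exists k; by rewrite memB (negbTE hg).
  rewrite /leximin_lt /sorted_utilities /utilities.
  apply: (@keyL _ _ (fun k => v (A k)) (fun k => v (B k)) (v (A i))).
    move=> k; rewrite ffunE; case: (eqVneq k i) => [->|ki].
      by right; split.
    case: (eqVneq k j) => [->|kj]; last by left.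
    right; split => //; apply: ltW; apply: (lt_le_trans Hlt).
    exact: vmono (subD1set _ _).
  by exists i; split => //; rewrite ffunE eqxx (lt_eqF marg).
- move=> [B [HB [Hle [j Hj]]]].
  case: (@arg_minP _ _ _ j (fun k => v (A k) < v (B k)) (fun k => v (A k)) Hj)
    => k0 Pk0 Hmin.
  apply: Hlex; exists B; split => //.
  rewrite /leximin_lt /sorted_utilities /utilities.
  apply: (@keyL _ _ (fun k => v (A k)) (fun k => v (B k)) (v (A k0))).
    move=> k; case: (boolP (v (A k) < v (B k))) => h.
      right; split; first exact: Hmin.
      exact: le_lt_trans (Hmin k h) h.
    by left; apply/eqP; rewrite eq_le Hle leNgt.
  by exists k0; split => //; rewrite (lt_eqF Pk0).
Qed.
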